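(* Let $\mathcal{G}=\langle V,E,\omega,\lambda\rangle$ be any finite weighted coloured--edge graph with colour set $M$. Then there exists a canonical weighted coloured--edge graph $\mathcal{G}^*=\langle V,E^*,\omega^*,\lambda^*\rangle$ with the same vertex set $V$ and the same colour set $M$, such that $E\subseteq E^*$, $\lambda^*|_E=\lambda$, and every minimal path in $\mathcal{G}$ (from any vertex $u$ to any other vertex $v$) is also a minimal path from $u$ to $v$ in $\mathcal{G}^*$.
   Context: A weighted coloured--edge graph $\mathcal{G}=\langle V,E,\omega,\lambda\rangle$ consists of a directed multigraph with vertex set $V$ and edge set $E$ (each edge $e$ has an initial vertex and a distinct terminal vertex; multiple edges between the same ordered pair are allowed), a weight function $\omega:E\to\mathbb{R}^+$ (strictly positive reals), and a surjective colour function $\lambda:E\to M$ onto a set $M$ of colours. It is finite if $V$ and $E$ are finite. A path from $u$ to $v$ is a sequence of edges $e_1,\dots,e_l$ ($l\ge 1$) such that the initial vertex of $e_1$ is $u$, the terminal vertex of $e_l$ is $v$, the terminal vertex of $e_i$ is the initial vertex of $e_{i+1}$, and no vertex is visited twice. For a path $p$ and colour $c\in M$, $\omega_c(p)$ is the sum of $\omega(e)$ over the edges $e$ of $p$ with $\lambda(e)=c$. For paths $p,q$ with the same source and destination, $p\le q$ means $\omega_c(p)\le\omega_c(q)$ for every $c\in M$. A path $p$ from $u$ to $v$ is minimal if there is no path $q$ from $u$ to $v$ with $q\le p$ and $\omega_c(q)<\omega_c(p)$ for some colour $c$. The graph is canonical if (i) it is complete in each colour: for all distinct vertices $x\ne y$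 and every colour $c$ there is exactly one edge from $x$ to $y$ of colour $c$; and (ii) it satisfies the triangle inequality in each colour: for all distinct vertices $x,y,z$ and every colour $c$, the edges $e_{xy},e_{yz},e_{xz}$ of colour $c$ satisfy $\omega(e_{xz})\le\omega(e_{xy})+\omega(e_{yz})$.
   Formalization: The graph 𝒢 has no two distinct edges with the same initial vertex, the same terminal vertex and the same colour; parallel edges of different colours remain allowed. Apart from conventions, each condition added here is assumed in the paper as well or is needed for the statement above to hold. *)

(* Defs.v *)
From HB Require Import structures.
From mathcomp Require Import all_boot all_order all_algebra.
Set Implicit Arguments. Unset Strict Implicit. Unset Printing Implicit Defensive.
Import Order.TTheory GRing.Theory Num.Theory.
Local Open Scope ring_scope.

Section WCEG.
Variables (R : realFieldType) (V : finType) (M : eqType) (E : Type).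
Variables (src dst : E -> V) (w : E -> R) (col : E -> M).

Definition wceg : Prop :=
  [/\ forall e, src e <> dst e,
      forall e, 0 < w e
    & forall c : M, exists e, col e = c].

Fixpoint walk (u v : V) (p : seq E) : bool :=
  match p with
  | [::] => false
  | [:: e] => (src e == u) && (dst e == v)
  | e :: p' => (src e == u) && walk (dst e) v p'
  end.

Definition is_path (u v : V) (p : seq E) : bool :=
  walk u v p && uniq (u :: map dst p).

Definition wcol (c : M) (p : seq E) : R := \sum_(e <- p | col e == c) w e.

Definition minimal_path (u v : V) (p : seq E) : Prop :=
  is_path u v p /\
  ~ (exists q, [/\ is_path u v q,
                   forall c, wcol c q <= wcol c p
                 & exists c, wcol c q < wcol c p]).

Definition canonical : Prop :=
  (forall (x y : V) (c : M), x != y ->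
     exists e, [/\ src e = x, dst e = y, col e = c &
                 forall e', src e' = x -> dst e' = y -> col e' = c -> e' = e]) /\
  (forall (x y z : V) (c : M) (exy eyz exz : E),
     x != y -> y != z -> x != z ->
     src exy = x -> dst exy = y -> col exy = c ->
     src eyz = y -> dst eyz = z -> col eyz = c ->
     src exz = x -> dst exz = z -> col exz = c ->
     w exz <= w exy + w eyz).

Definition no_parallel_same_colour : Prop :=
  forall e1 e2, src e1 = src e2 -> dst e1 = dst e2 -> col e1 = col e2 -> e1 = e2.
End WCEG.

(* Main.v *)
Require Import Defs.
From HB Require Import structures.
From mathcomp Require Import all_boot all_order all_algebra.
Import Order.TTheory GRing.Theory Num.Theory.
Local Open Scope ring_scope.

Section Walk.
Variables (V : finType) (E : Type) (src dst : E -> V).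

Lemma walk_cat u x v p1 p2 : walk src dst u x p1 -> walk src dst x v p2 ->
  walk src dst u v (p1 ++ p2).
Proof.
elim: p1 u => [|e p1 IH] u //.
case: p1 IH => [|e' p1] IH.
  clear IH; move=> /andP[He /eqP Hd]; case: p2 => [|e2 p2] //= H2.
  by rewrite He Hd.
move=> /= /andP[He H1] H2.
by rewrite He; exact: (IH _ H1 H2).
Qed.

Lemma walk_last u v p : walk src dst u v p -> v \in map dst p.
Proof.
elim: p u => [|e p IH] u //.
case: p IH => [|e' p] IH.
  by move=> /andP[_ /eqP <-]; rewrite /= inE eqxx.
move=> /= /andP[_ H]; rewrite inE (IH _ H) orbT //.
Qed.

Lemma walk_flatten (E2 : eqType) (s2 d2 : E2 -> V) (g : E2 -> seq E) u v q :
  walk s2 d2 u v q -> (forall e, e \in q -> walk src dst (s2 e) (d2 e) (g e)) ->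
  walk src dst u v (flatten (map g q)).
Proof.
elim: q u => [|e q IH] u //.
case: q IH => [|e' q] IH.
  move=> /andP[/eqP He /eqP Hd] Hg /=; rewrite cats0 -He -Hd.
  by apply: Hg; rewrite inE eqxx.
move=> /= /andP[/eqP He H1] Hg.
apply: (@walk_cat _ (d2 e)).
  by rewrite -He; apply: Hg; rewrite inE eqxx.
apply: (IH _ H1) => f Hf; apply: Hg; rewrite inE Hf orbT //.
Qed.

End Walk.

Section Red.
Variables (V : finType) (E : eqType) (src dst : E -> V).

Lemma walk_from_mid a b r x : walk src dst a b r -> uniq (map dst r) ->
  x \in map dst r ->
  x = b \/ exists r', [/\ walk src dst x b r', uniq (x :: map dst r') & subseq r' r].
Proof.
elim: r a => [|f r IH] a //.
case: r IH => [|f2 r] IH.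
  move=> /andP[_ /eqP <-] _; rewrite /= inE => /eqP ->; by left.
move=> /= /andP[_ Hw] /andP[Hn Hu]; rewrite inE => /orP[/eqP ->|Hx].
  right; exists (f2 :: r); split => //=; first by rewrite Hn.
  exact: (subseq_cons (f2 :: r) f).
have [->|[r' [H1 H2 H3]]] := IH _ Hw Hu Hx; first by left.
right; exists r'; split => //.
exact: (subseq_trans H3 (subseq_cons _ _)).
Qed.

Lemma walk_reduce u v q : (forall e, src e != dst e) -> walk src dst u v q ->
  u = v \/ exists q', is_path src dst u v q' /\ subseq q' q.
Proof.
move=> Hsd; elim: q u => [|e q IH] u //.
case: q IH => [|e2 q] IH.
  move=> /andP[/eqP He /eqP Hd]; right; exists [:: e]; split; last by rewrite subseq_refl.
  rewrite /is_path /= -He Hd !eqxx /= inE andbT.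
  by rewrite -Hd; apply: Hsd.
move=> /= /andP[/eqP He Hw].
have [Hd|[r [Hr Hs]]] := IH _ Hw.
  right; exists [:: e]; split; last by rewrite /= eqxx.
  by rewrite /is_path /= -He -Hd !eqxx /= inE andbT Hsd.
have /andP[Hrw Hru] := Hr.
case: (boolP (u \in map dst r)) => Hu.
  move: Hru => /= /andP[_ Hru].
  have [->|[r' [H1 H2 H3]]] := walk_from_mid _ _ _ _ Hrw Hru Hu; first by left.
  right; exists r'; split; first by rewrite /is_path H1 H2.
  exact: (subseq_trans H3 (subseq_trans Hs (subseq_cons _ _))).
right; exists (e :: r); split; last by rewrite /= eqxx.
rewrite /is_path; case: r Hr Hs Hrw Hru Hu => [|f r] // Hr Hs Hrw Hru Hu.
rewrite /= He eqxx /=; apply/andP; split; first exact: Hrw.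
rewrite inE negb_or Hu andbT.
move: Hru; rewrite /= => ->; rewrite andbT -He Hsd.
by [].
Qed.

End Red.

Lemma sum_subseq (R : numDomainType) (E : eqType) (w : E -> R) (P : pred E)
  s1 s2 : (forall e, 0 <= w e) -> subseq s1 s2 ->
  \sum_(e <- s1 | P e) w e <= \sum_(e <- s2 | P e) w e.
Proof.
move=> Hw; elim: s2 s1 => [|y s2 IH] s1.
  by rewrite subseq0 => /eqP ->.
case: s1 => [|x s1] H.
  rewrite big_nil; apply: sumr_ge0 => i _; exact: Hw.
move: H => /=; case: eqP => [->|_] H.
  rewrite !big_cons; case: (P y) => /=; rewrite ?lerD2l; exact: (IH _ H).
rewrite [X in _ <= X]big_cons; case: (P y) => /=; last exact: IH.
rewrite -[X in X <= _]add0r; apply: lerD => //; exact: IH.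
Qed.

Section Main.
Variables (R : realFieldType) (V E : finType) (M : eqType)
  (src dst : E -> V) (w : E -> R) (col : E -> M).
Hypothesis HG : wceg src dst w col.

Lemma w_pos e : 0 < w e. Proof. by case: HG. Qed.
Lemma w_ge0 e : 0 <= w e. Proof. exact: ltW (w_pos e). Qed.
Lemma sd e : src e != dst e. Proof. by case: HG => H _ _; apply/eqP. Qed.

Definition K : R := 1 + \sum_(e : E) w e.
Definition NN := #|V|.
Definition seqof (t : NN.-tuple (option E)) : seq E := pmap id t.
Definition len (s : seq E) : R := \sum_(e <- s) w e.
Definition cand c x y (t : NN.-tuple (option E)) : bool :=
  walk src dst x y (seqof t) && all (fun e => col e == c) (seqof t).
Definition dist c x y : R :=
  \big[Order.min/K]_(t | cand c x y t) len (seqof t).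

Lemma sumE_ge0 : 0 <= \sum_(e : E) w e.
Proof. by apply: sumr_ge0 => e _; apply: w_ge0. Qed.

Lemma K_pos : 0 < K.
Proof. by rewrite /K ltr_pwDl // sumE_ge0. Qed.

Lemma len_pos x y s : walk src dst x y s -> 0 < len s.
Proof.
case: s => [|e s] // _; rewrite /len big_cons.
by rewrite ltr_pwDl ?w_pos // sumr_ge0 // => i _; apply: w_ge0.
Qed.

Lemma dist_le_K c x y : dist c x y <= K.
Proof. exact: bigmin_le_id. Qed.

Lemma dist_pos c x y : 0 < dist c x y.
Proof.
apply/bigmin_gtP; split; first exact: K_pos.
by move=> t /andP[Hw _]; apply: len_pos Hw.
Qed.

Lemma pmap_some (s : seq E) n : pmap id (map Some s ++ nseq n None) = s.
Proof. by elim: s => [|e s IH] /=; [elim: n|rewrite IH]. Qed.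

Lemma dist_le_walk c x y q : x != y -> walk src dst x y q ->
  all (fun e => col e == c) q -> dist c x y <= len q.
Proof.
move=> Hxy Hw Ha.
have [Exy|[q' [Hp Hs]]] := @walk_reduce _ _ src dst x y q (fun e => sd e) Hw.
  by rewrite Exy eqxx in Hxy.
have /andP[Hw' Hu] := Hp.
have Hsz : (size q' < NN)%N.
  have := card_uniqP Hu => Hc. 
  have := max_card (mem (x :: map dst q')).
  by rewrite Hc /= size_map.
have Hsz2 : size (map Some q' ++ nseq (NN - size q') None) == NN.
  by rewrite size_cat size_map size_nseq subnKC // ltnW.
pose t := Tuple Hsz2.
have Ht : seqof t = q' by rewrite /seqof /= pmap_some.
apply: (@bigmin_inf _ _ _ _ t).
  rewrite /cand Ht Hw' /=; apply/allP => e He; exact: (allP Ha e (mem_subseq Hs He)).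
rewrite Ht; exact: sum_subseq w_ge0 Hs.
Qed.

Lemma dist_witness c x y : K <= dist c x y \/
  exists t, cand c x y t && (len (seqof t) <= dist c x y).
Proof.
case: (pickP (fun t => cand c x y t && (len (seqof t) <= dist c x y))) => [t Ht|H].
  by right; exists t.
case: (leP K (dist c x y)) => HK; first by left.
exfalso.
have : dist c x y < dist c x y.
  apply/bigmin_gtP; split => // t Ht.
  by move: (H t); rewrite Ht /= ltNge => ->.
by rewrite ltxx.
Qed.

Lemma wcol_mono c0 c s : all (fun e => col e == c0) s ->
  wcol w col c s = if c0 == c then len s else 0.
Proof.
rewrite /wcol /len; elim: s => [|e s IH]; first by rewrite !big_nil; case: ifP.
move=> /= /andP[/eqP He Ha]; rewrite !big_cons IH // He.
by case: ifP => ->.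
Qed.

Lemma wcol1 c e : wcol w col c [:: e] = if col e == c then w e else 0.
Proof. by rewrite /wcol big_cons big_nil; case: ifP => _; rewrite ?addr0. Qed.

Lemma wcol_flatten (T : Type) (g : T -> seq E) c q :
  wcol w col c (flatten (map g q)) = \sum_(x <- q) wcol w col c (g x).
Proof.
elim: q => [|x q IH]; first by rewrite /wcol !big_nil.
by rewrite /= big_cons -IH /wcol big_cat.
Qed.

Lemma wcol_flatten1 c q : wcol w col c q = \sum_(x <- q) wcol w col c [:: x].
Proof.
rewrite -wcol_flatten; congr wcol.
by elim: q => //= x q <-.
Qed.

Lemma sum_le_K (P : pred E) p : uniq p -> \sum_(e <- p | P e) w e < K.
Proof.
move=> Hu; apply: (@le_lt_trans _ _ (\sum_(e <- p) w e)).
  rewrite big_mkcond /=; apply: ler_sum => e _; case: (P e) => //; exact: w_ge0.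
have H1 : \sum_(i in p) w i <= \sum_(i : E) w i.
  rewrite [X in _ <= X](bigID (fun i => i \in p)) /= lerDl.
  by apply: sumr_ge0 => i _; apply: w_ge0.
rewrite (big_uniq _ Hu) /K; apply: (le_lt_trans H1).
by rewrite ltrDr ltr01.
Qed.

Lemma nodom u v p Q : minimal_path src dst w col u v p -> walk src dst u v Q ->
  (forall c, wcol w col c Q <= wcol w col c p) ->
  (exists c, wcol w col c Q < wcol w col c p) -> False.
Proof.
move=> [Hp Hmin] HQ Hle [c Hlt].
have [Euv|[q' [Hq' Hs]]] := @walk_reduce _ _ src dst u v Q (fun e => sd e) HQ.
  move: Hp => /andP[Hw Hu]; move: Hu; rewrite /= Euv (@walk_last _ _ _ _ _ _ _ Hw) //.
apply: Hmin; exists q'; split => //.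
  move=> c'; apply: le_trans (Hle c'); exact: sum_subseq w_ge0 Hs.
exists c; apply: le_lt_trans Hlt; exact: sum_subseq w_ge0 Hs.
Qed.

Lemma minimal_edge u v p e : minimal_path src dst w col u v p -> e \in p ->
  dist (col e) (src e) (dst e) = w e.
Proof.
move=> Hm Hep.
have Hle : dist (col e) (src e) (dst e) <= w e.
  have := @dist_le_walk (col e) (src e) (dst e) [:: e] (sd e).
  by rewrite /= !eqxx /len big_seq1; apply.
apply/eqP; rewrite eq_le Hle /= leNgt; apply/negP => Hlt.
have Hpu : uniq p.
  by move: Hm => [/andP[_ /= /andP[_ Hu]] _]; exact: map_uniq Hu.
have [HK|[t /andP[/andP[Htw Hta] Htl]]] := dist_witness (col e) (src e) (dst e).
  have : w e < K.
    apply: (le_lt_trans _ (sum_le_K predT p Hpu)).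
    rewrite (bigD1_seq e Hep Hpu) /= ler_wpDr //.
    by apply: sumr_ge0 => i _; apply: w_ge0.
  by rewrite ltNge (le_trans HK (ltW Hlt)).
pose g := fun e2 => if e2 == e then seqof t else [:: e2].
have Hp := Hm.1; have /andP[Hpw _] := Hp.
apply: (@nodom u v p (flatten (map g p)) Hm).
- apply: (@walk_flatten _ _ src dst _ src dst g u v p Hpw) => e2 _.
  rewrite /g; case: eqP => [->|_] //=; by rewrite !eqxx.
- move=> c; rewrite wcol_flatten [X in _ <= X]wcol_flatten1.
  apply: ler_sum => e2 _; rewrite /g; case: eqP => [->|_] //.
  rewrite wcol1 (wcol_mono _ _ _ Hta); case: ifP => // _.
  exact: ltW (le_lt_trans Htl Hlt).
- exists (col e); rewrite wcol_flatten [X in _ < X]wcol_flatten1.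
  rewrite (bigD1_seq e Hep Hpu) [X in _ < X](bigD1_seq e Hep Hpu) /=.
  apply: ltr_leD.
    rewrite /g eqxx wcol1 (wcol_mono _ _ _ Hta) eqxx.
    exact: le_lt_trans Htl Hlt.
  apply: ler_sum => e2 /negPf He2; by rewrite /g He2.
Qed.

Lemma tri c x y z : x != z -> dist c x z <= dist c x y + dist c y z.
Proof.
move=> Hxz.
have [HK|[t1 /andP[/andP[H1w H1a] H1l]]] := dist_witness c x y.
  apply: le_trans (dist_le_K c x z) _; apply: le_trans HK _.
  by rewrite lerDl; exact: ltW (dist_pos _ _ _).
have [HK|[t2 /andP[/andP[H2w H2a] H2l]]] := dist_witness c y z.
  apply: le_trans (dist_le_K c x z) _; apply: le_trans HK _.
  by rewrite lerDr; exact: ltW (dist_pos _ _ _).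
have Hw := @walk_cat _ _ src dst x y z _ _ H1w H2w.
have Ha : all (fun e => col e == c) (seqof t1 ++ seqof t2) by rewrite all_cat H1a H2a.
apply: le_trans (dist_le_walk _ _ _ _ Hxz Hw Ha) _.
rewrite /len big_cat; exact: lerD.
Qed.

Lemma mem_le_sum (T : eqType) (f : T -> R) (P : pred T) q x :
  (forall y, 0 <= f y) -> x \in q -> P x -> f x <= \sum_(y <- q | P y) f y.
Proof.
move=> Hf; elim: q => [|y q IH] //; rewrite inE big_cons => /orP[/eqP <-|Hx] Px.
  rewrite Px lerDl; exact: sumr_ge0.
case: (P y); last exact: IH.
rewrite -[X in X <= _]add0r; apply: lerD => //; exact: IH.
Qed.

Hypothesis Hnp : no_parallel_same_colour src dst col.

Definition Fty := {t : V * V * M | (t.1.1 != t.1.2) &&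
   ~~ [exists e : E, (src e == t.1.1) && (dst e == t.1.2) && (col e == t.2)]}.
Definition src' (x : E + Fty) : V := match x with inl e => src e | inr f => (val f).1.1 end.
Definition dst' (x : E + Fty) : V := match x with inl e => dst e | inr f => (val f).1.2 end.
Definition col' (x : E + Fty) : M := match x with inl e => col e | inr f => (val f).2 end.
Definition w' (x : E + Fty) : R := dist (col' x) (src' x) (dst' x).

Lemma walk_inl u v q : walk src' dst' u v (map inl q) = walk src dst u v q.
Proof.
elim: q u => [|e q IH] u //.
by case: q IH => [|e2 q] IH //; rewrite /=; congr (_ && _); exact: (IH (dst e)).
Qed.

Lemma pres u v p : minimal_path src dst w col u v p ->
  minimal_path src' dst' w' col' u v (map inl p).
Proof.
move=> Hm; have Hm' := Hm; case: Hm' => Hp Hmin.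
have Hpu : uniq p.
  by move: Hp => /andP[_ /= /andP[_ Hu]]; exact: map_uniq Hu.
have Hwp : forall c, wcol w' col' c (map inl p) = wcol w col c p.
  move=> c; rewrite /wcol big_map big_mkcond [RHS]big_mkcond; apply: eq_big_seq => e He /=.
  by rewrite /w' /= (minimal_edge _ _ _ _ Hm He).
split.
  move: Hp => /andP[H1 H2]; rewrite /is_path walk_inl H1 /=.
  by rewrite -map_comp.
move=> [q [Hq Hle [c Hlt]]].
pose g := fun e' => if [pick t | cand (col' e') (src' e') (dst' e') t &&
     (len (seqof t) <= w' e')] is Some t then seqof t else [::].
have Hg : forall e', e' \in q -> [&& walk src dst (src' e') (dst' e') (g e'),
    all (fun e => col e == col' e') (g e') & (len (g e') <= w' e')].
  move=> e' He'; rewrite /g; case: pickP => [t /andP[/andP[A B] C]|Hn].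
    by rewrite A B C.
  exfalso.
  have [HK|[t Ht]] := dist_witness (col' e') (src' e') (dst' e'); last first.
    by move: (Hn t); rewrite /w' Ht.
  have H1 : w' e' <= wcol w' col' (col' e') q.
    by apply: mem_le_sum => // y; exact: ltW (dist_pos _ _ _).
  have H2 := le_trans H1 (Hle (col' e')); rewrite Hwp in H2.
  have H3 := sum_le_K (fun e => col e == col' e') p Hpu.
  have := le_lt_trans (le_trans HK H2) H3.
  by rewrite ltxx.
have Hq' := Hq; move: Hq' => /andP[Hqw _].
have Hfl : forall c', wcol w col c' (flatten (map g q)) <= wcol w' col' c' q.
  move=> c'; rewrite wcol_flatten [X in _ <= X]/wcol [X in _ <= X]big_mkcond /= big_seq [X in _ <= X]big_seq.
  apply: ler_sum => e' He'; case/and3P: (Hg e' He') => _ Ha Hl.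
  rewrite (wcol_mono _ _ _ Ha); case: ifP => //.
apply: (@nodom u v p (flatten (map g q)) Hm).
- apply: (@walk_flatten _ _ src dst _ src' dst' g u v q Hqw) => e' He'.
  by case/and3P: (Hg e' He').
- move=> c'; apply: le_trans (Hfl c') _; rewrite -Hwp; exact: Hle.
- exists c; rewrite -Hwp; exact: le_lt_trans (Hfl c) Hlt.
Qed.

Lemma construct :
  exists (F : Type) (src'' dst'' : (E + F)%type -> V)
         (w'' : (E + F)%type -> R) (col'' : (E + F)%type -> M),
    [/\ wceg src'' dst'' w'' col'',
        canonical src'' dst'' w'' col'',
        forall e : E, src'' (inl e) = src e /\ dst'' (inl e) = dst e,
        forall e : E, col'' (inl e) = col e &
        forall (u v : V) (p : seq E),
          minimal_path src dst w col u v p ->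
          minimal_path src'' dst'' w'' col'' u v (map inl p)].
Proof.
exists Fty, src', dst', w', col'; split => //; last exact: pres.
- split.
  + case => [e|[[[a b] c] /= Hf]] /=; first by apply/eqP; exact: sd.
    by case/andP: Hf => /eqP.
  + move=> x; exact: dist_pos.
  + move=> c; case: HG => _ _ Hs; case: (Hs c) => e He; by exists (inl e).
- split.
  + move=> x y c Hxy.
    case: (boolP [exists e, (src e == x) && (dst e == y) && (col e == c)]).
      move=> /existsP [e /andP[/andP[/eqP Hs /eqP Hd] /eqP Hc]].
      exists (inl e); split => // -[e2|f] /=.
        move=> H1 H2 H3; congr inl; apply: Hnp; congruence.
      case: f => [[[a b] c'] Hf] /= Ha Hb Hc'; subst.
      exfalso; case/andP: Hf => _ /negP []; apply/existsP; exists e; by rewrite !eqxx.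
    move=> Hn.
    have Hf : ((x, y, c).1.1 != (x, y, c).1.2) && ~~ [exists e : E,
      (src e == (x, y, c).1.1) && (dst e == (x, y, c).1.2) && (col e == (x, y, c).2)].
      by rewrite /= Hxy Hn.
    exists (inr (exist _ (x, y, c) Hf)); split => // -[e2|f] /=.
      move=> H1 H2 H3; exfalso; move/negP: Hn; apply; apply/existsP; exists e2.
      by rewrite H1 H2 H3 !eqxx.
    case: f => [[[a b] c'] Hf'] /= Ha Hb Hc; subst; congr inr; exact: val_inj.
  + move=> x y z c exy eyz exz Hxy Hyz Hxz Hs1 Hd1 Hc1 Hs2 Hd2 Hc2 Hs3 Hd3 Hc3.
    rewrite /w' Hs1 Hd1 Hc1 Hs2 Hd2 Hc2 Hs3 Hd3 Hc3; exact: tri.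
Qed.

End Main.

Theorem lemma1 (R : realFieldType) (V E : finType) (M : eqType)
  (src dst : E -> V) (w : E -> R) (col : E -> M)
  (HG : wceg src dst w col)
  (Hnp : no_parallel_same_colour src dst col) :
  exists (F : Type) (src' dst' : (E + F)%type -> V)
         (w' : (E + F)%type -> R) (col' : (E + F)%type -> M),
    [/\ wceg src' dst' w' col',
        canonical src' dst' w' col',
        forall e : E, src' (inl e) = src e /\ dst' (inl e) = dst e,
        forall e : E, col' (inl e) = col e &
        forall (u v : V) (p : seq E),
          minimal_path src dst w col u v p ->
          minimal_path src' dst' w' col' u v (map inl p)].
Proof. exact: (@construct R V E M src dst w col HG Hnp). Qed.
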